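(* Consider the fully discrete, second-order (BDF2) finite element scheme described in the context, and let $n\ge 1$. Suppose the quantities at steps $n$ and $n-1$ are given, the quantities at step $n+1$ are computed by the scheme, and $\bar E_{SPNP}^{n+1}+B>0$. Then: (1) (Positivity) if $c_{ih}^{n}>0$ on $\Omega$ for every $i$, then $c_{ih}^{n+1}>0$ on $\Omega$ for every $i$; (2) (Mass conservation) $(c_{ih}^{n+1},1)=(c_{ih}^{n},1)$ for every $i$; (3) (Energy dissipation) $$\frac{E_h^{n+1}-E_h^{n}}{\Delta t}\le -\frac{1}{Re}\int_\Omega 2\mu_{ph}^{*}\,\mathbb{D}\tilde{\mathbf u}_h^{n+1}:\mathbb{D}\tilde{\mathbf u}_h^{n+1}\,d\mathbf x-|\xi^{n+1}|^2\frac{Co}{Pe}\sum_{i=1}^N\big\|\sqrt{c_{ih}^{n+1}}\,\nabla \bar g_{ih}^{n+1}\big\|^2,$$ where for $m\ge 1$ $$E_h^{m}=\tfrac12\Big(\tfrac12\|\mathbf u_h^{m}\|^2+\tfrac12\|2\mathbf u_h^{m}-\mathbf u_h^{m-1}\|^2\Big)+\frac{\Delta t^2}{3}\|\nabla p_h^{m}\|^2+\tfrac12\big(|r^{m}|^2+|2r^{m}-r^{m-1}|^2\big).$$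
   Context: Setting. $\Omega\subset\mathbb R^2$ is a rectangular domain, $\mathcal T_h$ a uniform triangulation of $\bar\Omega$ with mesh size $0<h<1$. $(\cdot,\cdot)$ and $\|\cdot\|$ denote the $L^2(\Omega)$ inner product and norm; $L^2_0(\Omega)$ is the mean-zero subspace of $L^2(\Omega)$. Finite element spaces: $\mathbf X_h=\{\mathbf v_h\in H^1_0(\Omega)^2\cap C^0(\bar\Omega)^2:\mathbf v_h|_K\in P_{l_1}(K)^2\ \forall K\}$, $M_h=\{q_h\in L^2_0(\Omega)\cap C^0(\bar\Omega): q_h|_K\in P_{l_2}(K)\}$, $Q_h=\{\varphi_h\in H^1(\Omega)\cap C^0(\bar\Omega):\varphi_h|_K\in P_{l_3}(K)\}$, $S_h=Q_h\cap L^2_0(\Omega)$; $(\mathbf X_h,M_h)$ satisfies the discrete inf-sup condition. $\mathbb D\mathbf u=\frac12(\nabla\mathbf u+\nabla\mathbf u^T)$. Parameters: $N$ ion species $i=1,\dots,N$ with valences $z_i$; a positive definite matrix $W=(\omega_{ij})$ with nonnegative entries; positive constants $Re,Co,Pe,\lambda,\lambda_1,k$, $\mu_0>\mu_\infty>0$; a constant $B>0$; time step $\Delta t>0$. Data at steps $n,n-1$: $\mathbf u_h^{n},\mathbf u_h^{n-1}\in\mathbf X_h$, $p_h^n\in M_h$, $\sigma_{ih}^n,\sigma_{ih}^{n-1}\in Q_h$, concentrations $c_{ih}^n,c_{ih}^{n-1}$, potentials $V_h^n,V_h^{n-1}$, scalars $r^n,r^{n-1}$, viscosities $\mu_{ph}^n,\mu_{ph}^{n-1}$.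 Extrapolations: $\mathbf u_h^*=2\mathbf u_h^n-\mathbf u_h^{n-1}$, $\sigma_{ih}^*=2\sigma_{ih}^n-\sigma_{ih}^{n-1}$, $c_{ih}^*=2c_{ih}^n-c_{ih}^{n-1}$, $V_h^*=2V_h^n-V_h^{n-1}$, $\mu_{ph}^*=2\mu_{ph}^n-\mu_{ph}^{n-1}$. Scheme (step $n\to n+1$): find $\sigma_{ih}^{n+1},\bar V_h^{n+1},V_h^{n+1},\tilde{\mathbf u}_h^{n+1},\mathbf u_h^{n+1},\psi_h^{n+1},p_h^{n+1},r^{n+1},\xi^{n+1}$ such that, for all test functions $\eta_{ih},\phi_h\in Q_h$, $\mathbf v_h\in\mathbf X_h$, $q_h\in M_h$: (a) $\big(\frac{3\sigma_{ih}^{n+1}-4\sigma_{ih}^n+\sigma_{ih}^{n-1}}{2\Delta t},\eta_{ih}\big)+(\mathbf u_h^*\cdot\nabla\sigma_{ih}^{n+1},\eta_{ih})+(\nabla\sigma_{ih}^{n+1},\nabla\eta_{ih})=\frac1{Pe}\Big((\nabla\sigma_{ih}^*\cdot\nabla\sigma_{ih}^{n+1},\eta_{ih})-z_i(\nabla V_h^*,\nabla\eta_{ih})+(z_i\nabla\sigma_{ih}^{n+1}\cdot\nabla V_h^*,\eta_{ih})+(\sum_j\omega_{ij}\nabla\sigma_{ih}^{n+1}\cdot\nabla\sigma_{jh}^*c_{jh}^*,\eta_{ih})-(\omega_{ij}\nabla\sigma_{jh}^*c_{jh}^*,\nabla\eta_{ih})-(\omega_{ii}\nabla\sigma_{ih}^{n+1}c_{ih}^*,\nabla\eta_{ih})\Big)$;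 (b) $\bar c_{ih}^{n+1}=\exp(\sigma_{ih}^{n+1})$ and $c_{ih}^{n+1}=\frac{(c_{ih}^n,1)}{(\bar c_{ih}^{n+1},1)}\bar c_{ih}^{n+1}$; (c) $\bar V_h^{n+1}\in S_h$ with $(\lambda\nabla\bar V_h^{n+1},\nabla\phi_h)=\sum_i(z_ic_{ih}^{n+1},\phi_h)$; (d) $\bar E_{SPNP}^{n+1}=\frac{\lambda Co}2\|\nabla\bar V_h^{n+1}\|^2+Co\sum_i(c_{ih}^{n+1},\log c_{ih}^{n+1}-1)+\frac{Co}2\sum_{i,j}\omega_{ij}(c_{ih}^{n+1},c_{jh}^{n+1})$ and $\bar g_{ih}^{n+1}=\log c_{ih}^{n+1}+z_i\bar V_h^{n+1}+\sum_j\omega_{ij}c_{jh}^{n+1}$; (e) $\tilde{\mathbf u}_h^{n+1}\in\mathbf X_h$ with $\big(\frac{3\tilde{\mathbf u}_h^{n+1}-4\mathbf u_h^n+\mathbf u_h^{n-1}}{2\Delta t},\mathbf v_h\big)+\xi^{n+1}((\mathbf u_h^*\cdot\nabla)\mathbf u_h^*,\mathbf v_h)+\frac1{Re}(2\mu_{ph}^*\mathbb D\tilde{\mathbf u}_h^{n+1},\mathbb D\mathbf v_h)+(\nabla p_h^n,\mathbf v_h)=-Co\,\xi^{n+1}(\sum_iz_ic_{ih}^{n+1}\nabla\bar V_h^{n+1},\mathbf v_h)$; (f) $\xi^{n+1}=r^{n+1}/\sqrt{\bar E_{SPNP}^{n+1}+B}$, $V_h^{n+1}=\xi^{n+1}\bar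 V_h^{n+1}$, and $\frac{3r^{n+1}-4r^n+r^{n-1}}{2\Delta t}=\frac{1}{2\sqrt{\bar E_{SPNP}^{n+1}+B}}\Big(-\frac{Co}{Pe}\xi^{n+1}\sum_i\|\sqrt{c_{ih}^{n+1}}\nabla\bar g_{ih}^{n+1}\|^2+Co(\sum_iz_ic_{ih}^{n+1}\tilde{\mathbf u}_h^{n+1},\nabla\bar V_h^{n+1})+((\mathbf u_h^*\cdot\nabla)\mathbf u_h^*,\tilde{\mathbf u}_h^{n+1})\Big)$; (g) $\psi_h^{n+1}\in M_h$ with $(\nabla\psi_h^{n+1},\nabla q_h)=\frac3{2\Delta t}(\tilde{\mathbf u}_h^{n+1},\nabla q_h)$, then $\mathbf u_h^{n+1}=\tilde{\mathbf u}_h^{n+1}-\frac{2\Delta t}3\nabla\psi_h^{n+1}$, $p_h^{n+1}=\psi_h^{n+1}+p_h^n$; (h) $\mu_{ph}^{n+1}=\mu_\infty+(\mu_0-\mu_\infty)\big(1+\lambda_1^2(2\mathbb D\mathbf u_h^{n+1}:\mathbb D\mathbf u_h^{n+1})\big)^{\frac{k-1}2}$. This scheme discretizes a Carreau-fluid Navier–Stokes system coupled with a steric Poisson–Nernst–Planck system, using $c_i=e^{\sigma_i}$ and the auxiliary variable $r=\sqrt{E_{SPNP}+B}$. *)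

(* Defs.v *)
From mathcomp Require Import all_boot all_order all_algebra.
From mathcomp Require Import all_classical all_reals all_analysis.
Set Implicit Arguments. Unset Strict Implicit. Unset Printing Implicit Defensive.
Import Order.TTheory GRing.Theory Num.Theory.
Import numFieldNormedType.Exports.
Local Open Scope classical_set_scope.
Local Open Scope ring_scope.

(* Geometry: the rectangle Omega = ]a1,b1[ x ]a2,b2[ and its uniform          *)
(* triangulation: M1 x M2 equal rectangular cells of size hx x hy, each cell  *)
(* cut by its diagonal from the lower-left to the upper-right corner.         *)
Record grid (R : realType) := Grid {
  ga1 : R; gb1 : R; ga2 : R; gb2 : R; gM1 : nat; gM2 : nat }.

Section FE.
Variable R : realType.
Implicit Types (G : grid R).

Definition grid_ok G := ga1 G < gb1 G /\ ga2 G < gb2 G /\ (0 < gM1 G)%N /\ (0 < gM2 G)%N.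

Definition hx G : R := (gb1 G - ga1 G) / (gM1 G)%:R.
Definition hy G : R := (gb2 G - ga2 G) / (gM2 G)%:R.
(* mesh size = diameter of every triangle of the uniform triangulation *)
Definition meshsize G : R := Num.sqrt (hx G ^+ 2 + hy G ^+ 2).

Definition Omega G : set (R * R) :=
  [set x | ga1 G < x.1 < gb1 G /\ ga2 G < x.2 < gb2 G].
Definition Omegac G : set (R * R) :=
  [set x | ga1 G <= x.1 <= gb1 G /\ ga2 G <= x.2 <= gb2 G].
Definition bdry G : set (R * R) := Omegac G `\` Omega G.

(* closed triangle number (i,j,b) of the triangulation, i < M1, j < M2;
   b = false : lower triangle, b = true : upper triangle of cell (i,j) *)
Definition tri G (i j : nat) (b : bool) : set (R * R) :=
  [set x | let s := (x.1 - (ga1 G + i%:R * hx G)) / hx G in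
           let t := (x.2 - (ga2 G + j%:R * hy G)) / hy G in
           if b then 0 <= s /\ s <= t /\ t <= 1 else 0 <= t /\ t <= s /\ s <= 1].

Definition triint G (i j : nat) (b : bool) : set (R * R) :=
  [set x | let s := (x.1 - (ga1 G + i%:R * hx G)) / hx G in
           let t := (x.2 - (ga2 G + j%:R * hy G)) / hy G in
           if b then 0 < s /\ s < t /\ t < 1 else 0 < t /\ t < s /\ s < 1].
(* Omega minus the (Lebesgue-null) union of the edges of the triangulation;
   integrals over Omega are taken over this set (same value), so that partial
   derivatives of piecewise smooth functions are genuine derivatives at every
   point of the integration domain. *)
Definition Omega_int G : set (R * R) :=
  [set x | exists (i j : nat) (b : bool), (i < gM1 G)%N /\ (j < gM2 G)%N /\ triint G i j b x].

Definition poly2 (l : nat) (P : nat -> nat -> R) (x : R * R) : R :=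
  \sum_(i < l.+1) \sum_(j < l.+1 | (i + j <= l)%N) P i j * x.1 ^+ i * x.2 ^+ j.

Definition FEfun G (l : nat) (f : R * R -> R) : Prop :=
  (forall (i j : nat) (b : bool), (i < gM1 G)%N -> (j < gM2 G)%N ->
     exists P, forall x, tri G i j b x -> f x = poly2 l P x)
  /\ {within Omegac G, continuous f}.

Definition lam2 := (@lebesgue_measure R \x @lebesgue_measure R)%E.

Definition ip G (f g : R * R -> R) : R := Rintegral lam2 (Omega_int G) (fun x => f x * g x).
Definition onef : R * R -> R := fun _ => 1.

Definition vfun := ((R * R -> R) * (R * R -> R))%type.
Definition ipv G (u v : vfun) : R := ip G u.1 v.1 + ip G u.2 v.2.

Definition dx (f : R * R -> R) (x : R * R) : R := derive1 (fun t => f (t, x.2)) x.1.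
Definition dy (f : R * R -> R) (x : R * R) : R := derive1 (fun t => f (x.1, t)) x.2.
Definition grad (f : R * R -> R) : vfun := (dx f, dy f).
Definition ipg G (f g : R * R -> R) : R := ipv G (grad f) (grad g).
Definition gdot (f g : R * R -> R) (x : R * R) : R := dx f x * dx g x + dy f x * dy g x.

Definition lin (a : R) (f : R * R -> R) (b : R) (g : R * R -> R) : R * R -> R :=
  fun x => a * f x + b * g x.
Definition vlin (a : R) (u : vfun) (b : R) (v : vfun) : vfun :=
  (lin a u.1 b v.1, lin a u.2 b v.2).

Definition divv (v : vfun) (x : R * R) : R := dx v.1 x + dy v.2 x.

(* D u : D v  with D u = (grad u + grad u^T)/2 *)
Definition Dsym (u : vfun) (x : R * R) : R := (dy u.1 x + dx u.2 x) / 2.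
Definition DD (u v : vfun) (x : R * R) : R :=
  dx u.1 x * dx v.1 x + 2 * (Dsym u x * Dsym v x) + dy u.2 x * dy v.2 x.
Definition visc G (mu : R * R -> R) (u v : vfun) : R := ip G (fun x => 2 * mu x) (DD u v).
Definition conv G (w v : vfun) : R :=
  ip G (fun x => w.1 x * dx w.1 x + w.2 x * dy w.1 x) v.1 +
  ip G (fun x => w.1 x * dx w.2 x + w.2 x * dy w.2 x) v.2.

Definition Xh G l1 (v : vfun) : Prop :=
  FEfun G l1 v.1 /\ FEfun G l1 v.2 /\ (forall x, bdry G x -> v.1 x = 0 /\ v.2 x = 0).
Definition Mh G l2 (q : R * R -> R) : Prop := FEfun G l2 q /\ ip G q onef = 0.
Definition Qh G l3 (f : R * R -> R) : Prop := FEfun G l3 f.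
Definition Sh G l3 (f : R * R -> R) : Prop := FEfun G l3 f /\ ip G f onef = 0.

Definition inf_sup G l1 l2 : Prop :=
  exists beta : R, 0 < beta /\
    forall q, Mh G l2 q -> 0 < ip G q q ->
      exists v, Xh G l1 v /\ 0 < ipg G v.1 v.1 + ipg G v.2 v.2 /\
        beta * Num.sqrt (ip G q q) * Num.sqrt (ipg G v.1 v.1 + ipg G v.2 v.2)
          <= ip G (divv v) q.

Definition posdef N (W : 'M[R]_N) : Prop :=
  forall v : 'rV[R]_N, v != 0 -> 0 < (v *m W *m v^T) 0 0.

Definition Espnp G N (lambda Co : R) (W : 'M[R]_N) (c : 'I_N -> R * R -> R)
    (Vb : R * R -> R) : R :=
  lambda * Co / 2 * ipg G Vb Vb
  + Co * \sum_(i < N) ip G (c i) (fun x => ln (c i x) - 1)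
  + Co / 2 * \sum_(i < N) \sum_(j < N) W i j * ip G (c i) (c j).

Definition gbar N (z : 'I_N -> int) (W : 'M[R]_N) (c : 'I_N -> R * R -> R)
    (Vb : R * R -> R) (i : 'I_N) : R * R -> R :=
  fun x => ln (c i x) + (z i)%:~R * Vb x + \sum_(j < N) W i j * c j x.

Definition dissip G N z W (c : 'I_N -> R * R -> R) Vb (i : 'I_N) : R :=
  ip G (fun x => Num.sqrt (c i x) * dx (gbar z W c Vb i) x)
       (fun x => Num.sqrt (c i x) * dx (gbar z W c Vb i) x)
  + ip G (fun x => Num.sqrt (c i x) * dy (gbar z W c Vb i) x)
         (fun x => Num.sqrt (c i x) * dy (gbar z W c Vb i) x).

Definition Eh G (dt : R) (um umm : vfun) (pm : R * R -> R) (rm rmm : R) : R :=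
  (1/2) * ((1/2) * ipv G um um + (1/2) * ipv G (vlin 2 um (-1) umm) (vlin 2 um (-1) umm))
  + dt ^+ 2 / 3 * ipg G pm pm
  + (1/2) * (rm ^+ 2 + (2 * rm - rmm) ^+ 2).

(* (a), for species i, tested with eta; sig1 = sigma_i^{n+1}, sn/sm = sigma^n,
   sigma^{n-1}; ustar, sstar, cstar, Vstar the extrapolations *)
Definition eq_a G N (Pe dt : R) (z : 'I_N -> int) (W : 'M[R]_N)
    (sig1 sn sm sstar cstar : 'I_N -> R * R -> R) (Vstar : R * R -> R)
    (ustar : vfun) (i : 'I_N) (eta : R * R -> R) : Prop :=
  ip G (fun x => (3 * sig1 i x - 4 * sn i x + sm i x) / (2 * dt)) eta
  + ip G (fun x => ustar.1 x * dx (sig1 i) x + ustar.2 x * dy (sig1 i) x) eta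
  + ipg G (sig1 i) eta
  = Pe^-1 * ( ip G (gdot (sstar i) (sig1 i)) eta
              - (z i)%:~R * ipg G Vstar eta
              + ip G (fun x => (z i)%:~R * gdot (sig1 i) Vstar x) eta
              + ip G (fun x => \sum_(j < N) W i j * gdot (sig1 i) (sstar j) x * cstar j x) eta
              - \sum_(j < N | j != i)
                  ipv G (fun x => W i j * dx (sstar j) x * cstar j x,
                         fun x => W i j * dy (sstar j) x * cstar j x) (grad eta)
              - ipv G (fun x => W i i * dx (sig1 i) x * cstar i x,
                       fun x => W i i * dy (sig1 i) x * cstar i x) (grad eta)).

Definition eq_e G N (Re Co dt xi : R) (z : 'I_N -> int) (ut un um ustar : vfun)
    (mustar pn Vb : R * R -> R) (c1 : 'I_N -> R * R -> R) (v : vfun) : Prop :=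
  ipv G (vlin (3 / (2 * dt)) ut (1 / (2 * dt)) (vlin (-4) un 1 um)) v
  + xi * conv G ustar v + Re^-1 * visc G mustar ut v + ipv G (grad pn) v
  = - Co * xi * ipv G (fun x => \sum_(i < N) (z i)%:~R * c1 i x * dx Vb x,
                       fun x => \sum_(i < N) (z i)%:~R * c1 i x * dy Vb x) v.

Definition eq_f G N (Co Pe dt B xi r1 rn rm : R) (z : 'I_N -> int) (W : 'M[R]_N)
    (c1 : 'I_N -> R * R -> R) (Vb : R * R -> R) (lambda : R) (ut ustar : vfun) : Prop :=
  let S := Num.sqrt (Espnp G lambda Co W c1 Vb + B) in
  (3 * r1 - 4 * rn + rm) / (2 * dt)
  = (2 * S)^-1 * ( - (Co / Pe) * xi * \sum_(i < N) dissip G z W c1 Vb i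
                   + Co * ipv G (fun x => \sum_(i < N) (z i)%:~R * c1 i x * ut.1 x,
                                 fun x => \sum_(i < N) (z i)%:~R * c1 i x * ut.2 x) (grad Vb)
                   + conv G ustar ut).

Definition carreau (mu0 muinf lambda1 k : R) (u : vfun) : R * R -> R :=
  fun x => muinf + (mu0 - muinf) * (1 + lambda1 ^+ 2 * (2 * DD u u x)) `^ ((k - 1) / 2).

(* velocities produced by the projection step: elements of X_h + grad M_h *)
Definition proj_vel G l1 l2 (u : vfun) : Prop :=
  exists w phi, Xh G l1 w /\ Mh G l2 phi /\ u = vlin 1 w 1 (grad phi).

End FE.
Arguments onef {R}.

(* Main.v *)
Require Import Defs.
From mathcomp Require Import all_boot all_order all_algebra.
From mathcomp Require Import all_classical all_reals all_analysis.
From mathcomp Require Import measurable_realfun ring lra zify.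
Import Order.TTheory GRing.Theory Num.Theory.
Import numFieldNormedType.Exports.
Local Open Scope classical_set_scope.
Local Open Scope ring_scope.
Set Implicit Arguments. Unset Strict Implicit. Unset Printing Implicit Defensive.

Inductive polyf (R : realType) : (R * R -> R) -> Prop :=
| pf_cst (c : R) : polyf (fun _ => c)
| pf_fst : polyf fst
| pf_snd : polyf snd
| pf_add f g : polyf f -> polyf g -> polyf (fun x => f x + g x)
| pf_mul f g : polyf f -> polyf g -> polyf (fun x => f x * g x).
Arguments pf_fst {R}.
Arguments pf_snd {R}.

Lemma polyf_ext (R : realType) (f g : R * R -> R) : polyf f -> f =1 g -> polyf g.
Proof. by move=> pf /funext <-. Qed.

Lemma polyf_meas (R : realType) (f : R * R -> R) : polyf f -> measurable_fun setT f.
Proof.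
elim=> [c| | |f1 f2 _ h1 _ h2|f1 f2 _ h1 _ h2].
- exact: measurable_cst.
- exact: measurable_fst.
- exact: measurable_snd.
- exact: measurable_funD.
- exact: measurable_funM.
Qed.

Lemma polyf_bnd (R : realType) (f : R * R -> R) : polyf f ->
  forall K, exists M, forall x, `|x.1| <= K -> `|x.2| <= K -> `|f x| <= M.
Proof.
elim=> [c| | |f1 f2 _ h1 _ h2|f1 f2 _ h1 _ h2] K.
- by exists `|c|.
- by exists K => x.
- by exists K => x.
- have [M1 hM1] := h1 K; have [M2 hM2] := h2 K; exists (M1 + M2) => x a b.
  by apply: (le_trans (ler_normD _ _)); apply: lerD; [apply: hM1|apply: hM2].
- have [M1 hM1] := h1 K; have [M2 hM2] := h2 K; exists (M1 * M2) => x a b.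
  rewrite normrM; apply: ler_pM => //; [apply: hM1|apply: hM2] => //.
Qed.

Lemma polyf_dx (R : realType) (f : R * R -> R) : polyf f ->
  exists g, polyf g /\ forall x, is_derive x.1 (1:R) (fun t => f (t, x.2)) (g x).
Proof.
elim=> [c| | |f1 f2 _ [g1 [pg1 h1]] _ [g2 [pg2 h2]]|f1 f2 pf1 [g1 [pg1 h1]] pf2 [g2 [pg2 h2]]].
- exists (fun _ => 0); split; first exact: pf_cst.
  by move=> x; exact: (@is_derive_cst R R R c x.1 1).
- exists (fun _ => 1); split; first exact: pf_cst.
  by move=> x; exact: (@is_derive_id R R x.1 1).
- exists (fun _ => 0); split; first exact: pf_cst.
  move=> x; exact: (@is_derive_cst R R R x.2 x.1 1).
- exists (fun x => g1 x + g2 x); split; first exact: pf_add.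
  move=> x; exact: (is_deriveD (h1 x) (h2 x)).
- exists (fun x => f1 x * g2 x + f2 x * g1 x); split.
    by apply: (polyf_ext (pf_add (pf_mul pf1 pg2) (pf_mul pf2 pg1))). 
  move=> [x1 x2]; exact: (is_deriveM (h1 (x1,x2)) (h2 (x1,x2))).
Qed.

Lemma polyf_dy (R : realType) (f : R * R -> R) : polyf f ->
  exists g, polyf g /\ forall x, is_derive x.2 (1:R) (fun t => f (x.1, t)) (g x).
Proof.
elim=> [c| | |f1 f2 _ [g1 [pg1 h1]] _ [g2 [pg2 h2]]|f1 f2 pf1 [g1 [pg1 h1]] pf2 [g2 [pg2 h2]]].
- exists (fun _ => 0); split; first exact: pf_cst.
  by move=> x; exact: (@is_derive_cst R R R c x.2 1).
- exists (fun _ => 0); split; first exact: pf_cst.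
  move=> x; exact: (@is_derive_cst R R R x.1 x.2 1).
- exists (fun _ => 1); split; first exact: pf_cst.
  by move=> x; exact: (@is_derive_id R R x.2 1).
- exists (fun x => g1 x + g2 x); split; first exact: pf_add.
  move=> x; exact: (is_deriveD (h1 x) (h2 x)).
- exists (fun x => f1 x * g2 x + f2 x * g1 x); split.
    exact: (pf_add (pf_mul pf1 pg2) (pf_mul pf2 pg1)).
  move=> [x1 x2]; exact: (is_deriveM (h1 (x1,x2)) (h2 (x1,x2))).
Qed.

Lemma polyf_sum (R : realType) (I : Type) (s : seq I) (Pr : pred I) (F : I -> R * R -> R) :
  (forall i, polyf (F i)) -> polyf (fun x => \sum_(i <- s | Pr i) F i x).
Proof.
move=> hF; elim: s => [|a s IH].
  by apply: (polyf_ext (pf_cst 0)) => x; rewrite big_nil.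
case: (boolP (Pr a)) => Pa.
  apply: (polyf_ext (pf_add (hF a) IH)) => x; by rewrite big_cons Pa.
by apply: (polyf_ext IH) => x; rewrite big_cons (negbTE Pa).
Qed.

Lemma polyf_expr (R : realType) (f : R * R -> R) m : polyf f -> polyf (fun x => f x ^+ m).
Proof.
move=> pf; elim: m => [|m IH].
  by apply: (polyf_ext (pf_cst 1)) => x; rewrite expr0.
by apply: (polyf_ext (pf_mul pf IH)) => x; rewrite exprS.
Qed.

Lemma poly2_polyf (R : realType) l (P : nat -> nat -> R) : polyf (poly2 l P).
Proof.
rewrite /poly2; apply: polyf_sum => i; apply: polyf_sum => j.
exact: (polyf_ext (pf_mul (pf_mul (pf_cst (P i j)) (polyf_expr i (@pf_fst R))) (polyf_expr j (@pf_snd R)))).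
Qed.
Lemma hx_gt0 (R : realType) (G : grid R) : grid_ok G -> 0 < hx G.
Proof.
move=> [h1 [h2 [h3 h4]]]; rewrite /hx divr_gt0 // ?subr_gt0 // ltr0n //.
Qed.

Lemma hy_gt0 (R : realType) (G : grid R) : grid_ok G -> 0 < hy G.
Proof.
move=> [h1 [h2 [h3 h4]]]; rewrite /hy divr_gt0 // ?subr_gt0 // ltr0n //.
Qed.

Lemma affine_near (R : realType) (c h l r a : R) : 0 < h -> l < (a - c) / h -> (a - c) / h < r ->
  \forall t \near a, l < (t - c) / h /\ (t - c) / h < r.
Proof.
move=> h0 la ar.
have : a \in `]c + l * h, c + r * h[.
  rewrite in_itv /=; apply/andP; split.
    by rewrite ltr_pdivlMr in la => //; lra.
  by rewrite ltr_pdivrMr in ar => //; lra.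
move=> /near_in_itvoo; apply: filterS => t; rewrite in_itv /= => /andP[t1 t2]; split.
  by rewrite ltr_pdivlMr //; lra.
by rewrite ltr_pdivrMr //; lra.
Qed.

Lemma triint_near1 (R : realType) (G : grid R) i j b (x : R * R) : grid_ok G ->
  triint G i j b x -> \forall t \near x.1, triint G i j b (t, x.2).
Proof.
move=> gok; have hx0 := hx_gt0 gok; rewrite /triint /=; case: b => [[h1 [h2 h3]]|[h1 [h2 h3]]].
- have := affine_near hx0 h1 h2; apply: filterS => t /= [t1 t2]; by split.
- have := affine_near hx0 h2 h3; apply: filterS => t /= [t1 t2]; by split.
Qed.

Lemma triint_near2 (R : realType) (G : grid R) i j b (x : R * R) : grid_ok G ->
  triint G i j b x -> \forall t \near x.2, triint G i j b (x.1, t).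
Proof.
move=> gok; have hy0 := hy_gt0 gok; rewrite /triint /=; case: b => [[h1 [h2 h3]]|[h1 [h2 h3]]].
- have := affine_near hy0 h2 h3; apply: filterS => t /= [t1 t2]; by split.
- have := affine_near hy0 h1 h2; apply: filterS => t /= [t1 t2]; by split.
Qed.

Lemma triint_tri (R : realType) (G : grid R) i j b (x : R * R) :
  triint G i j b x -> tri G i j b x.
Proof.
rewrite /triint /tri /=; case: b => [[h1 [h2 h3]]|[h1 [h2 h3]]]; split; try split; exact: ltW.
Qed.

Lemma triint_Omega (R : realType) (G : grid R) i j b (x : R * R) : grid_ok G ->
  (i < gM1 G)%N -> (j < gM2 G)%N -> triint G i j b x -> Omega G x.
Proof.
move=> gok iM jM; have hx0 := hx_gt0 gok; have hy0 := hy_gt0 gok.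
have [_ [_ [M1 M2]]] := gok.
have e1 : (gM1 G)%:R * hx G = gb1 G - ga1 G.
  by rewrite /hx mulrC -mulrA mulVf ?mulr1 // pnatr_eq0 -lt0n.
have e2 : (gM2 G)%:R * hy G = gb2 G - ga2 G.
  by rewrite /hy mulrC -mulrA mulVf ?mulr1 // pnatr_eq0 -lt0n.
have i1 : (i.+1)%:R <= (gM1 G)%:R :> R by rewrite ler_nat.
have j1 : (j.+1)%:R <= (gM2 G)%:R :> R by rewrite ler_nat.
have i0 : 0 <= i%:R :> R by [].
have j0 : 0 <= j%:R :> R by [].
have key : forall s t : R, 0 < s -> s < 1 -> 0 < t -> t < 1 ->
  (x.1 - (ga1 G + i%:R * hx G)) / hx G = s -> (x.2 - (ga2 G + j%:R * hy G)) / hy G = t ->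
  Omega G x.
  move=> s t s0 s1 t0 t1 es et.
  have ex1 : x.1 = ga1 G + i%:R * hx G + s * hx G.
    by rewrite -es mulfVK ?gt_eqF // addrC subrK.
  have ex2 : x.2 = ga2 G + j%:R * hy G + t * hy G.
    by rewrite -et mulfVK ?gt_eqF // addrC subrK.
  rewrite /Omega /=; rewrite -addn1 natrD in i1; rewrite -addn1 natrD in j1.
  have A1 : i%:R * hx G + s * hx G < (gM1 G)%:R * hx G.
    have : (i%:R + s) * hx G < (gM1 G)%:R * hx G by rewrite ltr_pM2r //; lra.
    by rewrite mulrDl.
  have A2 : j%:R * hy G + t * hy G < (gM2 G)%:R * hy G.
    have : (j%:R + t) * hy G < (gM2 G)%:R * hy G by rewrite ltr_pM2r //; lra.
    by rewrite mulrDl.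
  have B1 : 0 <= i%:R * hx G by rewrite mulr_ge0 // ltW.
  have B2 : 0 <= j%:R * hy G by rewrite mulr_ge0 // ltW.
  have C1 : 0 < s * hx G by rewrite mulr_gt0.
  have C2 : 0 < t * hy G by rewrite mulr_gt0.
  split; apply/andP; split; lra.
rewrite /triint /=; case: b => [[h1 [h2 h3]]|[h1 [h2 h3]]].
- by apply: (key _ _ h1 _ _ h3 erefl erefl); lra.
- by apply: (key _ _ _ h3 h1 _ erefl erefl); lra.
Qed.

Lemma Omega_int_Omega (R : realType) (G : grid R) (x : R * R) : grid_ok G ->
  Omega_int G x -> Omega G x.
Proof. by move=> gok [i [j [b [iM [jM h]]]]]; exact: triint_Omega h. Qed.

Lemma dx_of (R : realType) (f : R * R -> R) (x : R * R) d :
  is_derive x.1 (1:R) (fun t => f (t, x.2)) d -> dx f x = d.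
Proof. by move=> h; rewrite /dx derive1E derive_val. Qed.

Lemma dy_of (R : realType) (f : R * R -> R) (x : R * R) d :
  is_derive x.2 (1:R) (fun t => f (x.1, t)) d -> dy f x = d.
Proof. by move=> h; rewrite /dy derive1E derive_val. Qed.

Lemma FE_piece (R : realType) (G : grid R) l f i j b : grid_ok G -> FEfun G l f ->
  (i < gM1 G)%N -> (j < gM2 G)%N ->
  exists g0 g1 g2, polyf g0 /\ polyf g1 /\ polyf g2 /\ forall x, triint G i j b x ->
    f x = g0 x /\ is_derive x.1 (1:R) (fun t => f (t, x.2)) (g1 x)
    /\ is_derive x.2 (1:R) (fun t => f (x.1, t)) (g2 x).
Proof.
move=> gok [hP _] iM jM; have [P hp] := hP i j b iM jM.
have pp := poly2_polyf l P; have [g1 [pg1 d1]] := polyf_dx pp.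
have [g2 [pg2 d2]] := polyf_dy pp.
exists (poly2 l P), g1, g2; do 3 split => //; move=> x xT; split.
  by apply: hp; apply: triint_tri.
split.
- apply: near_eq_is_derive (d1 x).
  have := triint_near1 gok xT; apply: filterS => t tT; rewrite hp //; exact: triint_tri.
- apply: near_eq_is_derive (d2 x).
  have := triint_near2 gok xT; apply: filterS => t tT; rewrite hp //; exact: triint_tri.
Qed.

Definition pw (R : realType) (G : grid R) (f : R * R -> R) :=
  forall i j b, (i < gM1 G)%N -> (j < gM2 G)%N ->
    exists g, polyf g /\ forall x, triint G i j b x -> f x = g x.

Lemma FE_pw0 (R : realType) (G : grid R) l f : grid_ok G -> FEfun G l f -> pw G f.
Proof.
move=> gok hf i j b iM jM; have [g0 [g1 [g2 [p0 [p1 [p2 h]]]]]] := FE_piece b gok hf iM jM.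
by exists g0; split => // x /h [].
Qed.

Lemma FE_pwx (R : realType) (G : grid R) l f : grid_ok G -> FEfun G l f -> pw G (dx f).
Proof.
move=> gok hf i j b iM jM; have [g0 [g1 [g2 [p0 [p1 [p2 h]]]]]] := FE_piece b gok hf iM jM.
by exists g1; split => // x /h [_ [d _]]; exact: dx_of.
Qed.

Lemma FE_pwy (R : realType) (G : grid R) l f : grid_ok G -> FEfun G l f -> pw G (dy f).
Proof.
move=> gok hf i j b iM jM; have [g0 [g1 [g2 [p0 [p1 [p2 h]]]]]] := FE_piece b gok hf iM jM.
by exists g2; split => // x /h [_ [_ d]]; exact: dy_of.
Qed.

Lemma FE_derivable (R : realType) (G : grid R) l f x : grid_ok G -> FEfun G l f ->
  Omega_int G x -> derivable (fun t => f (t, x.2)) x.1 (1:R) /\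
                   derivable (fun t => f (x.1, t)) x.2 (1:R).
Proof.
move=> gok hf [i [j [b [iM [jM xT]]]]].
have [g0 [g1 [g2 [p0 [p1 [p2 h]]]]]] := FE_piece b gok hf iM jM.
have [_ [d1 d2]] := h x xT; by split; [case: d1|case: d2].
Qed.

Lemma pw_add (R : realType) (G : grid R) f g : pw G f -> pw G g -> pw G (fun x => f x + g x).
Proof.
move=> hf hg i j b iM jM; have [f1 [pf1 e1]] := hf i j b iM jM; have [g1 [pg1 e2]] := hg i j b iM jM.
by exists (fun x => f1 x + g1 x); split; [exact: pf_add| move=> x xT; rewrite e1 // e2].
Qed.

Lemma pw_mul (R : realType) (G : grid R) f g : pw G f -> pw G g -> pw G (fun x => f x * g x).
Proof.
move=> hf hg i j b iM jM; have [f1 [pf1 e1]] := hf i j b iM jM; have [g1 [pg1 e2]] := hg i j b iM jM.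
by exists (fun x => f1 x * g1 x); split; [exact: pf_mul| move=> x xT; rewrite e1 // e2].
Qed.

Lemma pw_cst (R : realType) (G : grid R) (c : R) : pw G (fun _ => c).
Proof. by move=> i j b iM jM; exists (fun _ => c); split => //; exact: pf_cst. Qed.

Lemma pw_ext (R : realType) (G : grid R) f g : pw G f -> {in Omega_int G, f =1 g} -> pw G g.
Proof.
move=> hf e i j b iM jM; have [f1 [pf1 e1]] := hf i j b iM jM.
exists f1; split => // x xT; rewrite -e1 // e //; rewrite inE; exists i, j, b; by [].
Qed.


Lemma polyf_aff1 (R : realType) (c h : R) : polyf (fun x : R * R => (x.1 - c) / h).
Proof.
apply: (polyf_ext (pf_add (pf_mul pf_fst (pf_cst h^-1)) (pf_cst (- (c / h))))) => x /=.
by rewrite mulrBl.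
Qed.

Lemma polyf_aff2 (R : realType) (c h : R) : polyf (fun x : R * R => (x.2 - c) / h).
Proof.
apply: (polyf_ext (pf_add (pf_mul pf_snd (pf_cst h^-1)) (pf_cst (- (c / h))))) => x /=.
by rewrite mulrBl.
Qed.

Lemma meas_lt (R : realType) (p q : R * R -> R) : polyf p -> polyf q ->
  measurable [set x | p x < q x].
Proof.
move=> pp pq.
have pd : polyf (fun x => q x + (-1) * p x) by apply: pf_add => //; apply: pf_mul => //; exact: pf_cst.
have := polyf_meas pd measurableT (measurable_itv `]0, +oo[).
rewrite setTI; congr measurable; apply/seteqP; split => x /=; rewrite in_itv /= andbT.
  by rewrite mulN1r subr_gt0.
by rewrite mulN1r subr_gt0.
Qed.

Lemma triint_meas (R : realType) (G : grid R) i j b : measurable (triint G i j b).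
Proof.
set s := (fun x : R * R => (x.1 - (ga1 G + i%:R * hx G)) / hx G).
set t := (fun x : R * R => (x.2 - (ga2 G + j%:R * hy G)) / hy G).
have ps : polyf s by exact: polyf_aff1.
have pt : polyf t by exact: polyf_aff2.
case: b.
- have -> : triint G i j true = [set x | (fun _ => 0) x < s x] `&` [set x | s x < t x]
     `&` [set x | t x < (fun _ => 1) x].
    by apply/seteqP; split => x /=; rewrite /triint /= -/(s x) -/(t x); [move=> [? [? ?]]|move=> [[? ?] ?]].
  by apply: measurableI; [apply: measurableI|]; apply: meas_lt => //; exact: pf_cst.
- have -> : triint G i j false = [set x | (fun _ => 0) x < t x] `&` [set x | t x < s x]
     `&` [set x | s x < (fun _ => 1) x].
    by apply/seteqP; split => x /=; rewrite /triint /= -/(s x) -/(t x); [move=> [? [? ?]]|move=> [[? ?] ?]].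
  by apply: measurableI; [apply: measurableI|]; apply: meas_lt => //; exact: pf_cst.
Qed.

Definition dec (R : realType) (G : grid R) (n : nat) : nat * nat * bool :=
  (n %% gM1 G, (n %/ gM1 G) %% gM2 G, odd (n %/ gM1 G %/ gM2 G))%N.

Definition Epc (R : realType) (G : grid R) (n : nat) : set (R * R) :=
  triint G (dec G n).1.1 (dec G n).1.2 (dec G n).2.

Lemma dec_enc (R : realType) (G : grid R) i j (b : bool) : grid_ok G ->
  (i < gM1 G)%N -> (j < gM2 G)%N ->
  dec G ((j + b * gM2 G) * gM1 G + i)%N = (i, j, b) /\ ((j + b * gM2 G) * gM1 G + i < 2 * gM2 G * gM1 G)%N.
Proof.
move=> [_ [_ [M1 M2]]] iM jM; split; last by case: b; rewrite /= ?mul1n ?mul0n; nia.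
rewrite /dec modnMDl modn_small // divnMDl // divn_small // addn0.
rewrite addnC modnMDl modn_small // divnMDl // divn_small // addn0.
by case: b.
Qed.

Lemma dec_ok (R : realType) (G : grid R) n : grid_ok G ->
  ((dec G n).1.1 < gM1 G)%N /\ ((dec G n).1.2 < gM2 G)%N.
Proof.
by move=> [_ [_ [M1 M2]]]; rewrite /dec /=; split; apply: ltn_pmod.
Qed.

Lemma Omega_int_bigcup (R : realType) (G : grid R) : grid_ok G ->
  Omega_int G = \bigcup_n Epc G n.
Proof.
move=> gok; apply/seteqP; split.
  move=> x [i [j [b [iM [jM h]]]]]; exists ((j + b * gM2 G) * gM1 G + i)%N => //.
  by rewrite /Epc (dec_enc b gok iM jM).1.
move=> x [n _ h]; have [i1 i2] := dec_ok n gok.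
by exists (dec G n).1.1, (dec G n).1.2, (dec G n).2.
Qed.

Lemma Omega_int_meas (R : realType) (G : grid R) : grid_ok G -> measurable (Omega_int G).
Proof.
move=> gok; rewrite (Omega_int_bigcup gok); apply: bigcupT_measurable => n.
exact: triint_meas.
Qed.

Lemma pw_meas (R : realType) (G : grid R) f : grid_ok G -> pw G f ->
  measurable_fun (Omega_int G) f.
Proof.
move=> gok hf; rewrite (Omega_int_bigcup gok); apply/measurable_fun_bigcup.
  by move=> n; exact: triint_meas.
move=> n; have [i1 i2] := dec_ok n gok.
have [g [pg e]] := hf _ _ (dec G n).2 i1 i2.
apply: (@eq_measurable_fun _ _ _ _ _ g).
  by move=> x; rewrite inE => xE; rewrite e.
apply: measurable_funS (polyf_meas pg) => //.
Qed.

Lemma fin_bound (R : realType) (P : nat -> R -> Prop) :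
  (forall n M M', P n M -> M <= M' -> P n M') -> (forall n, exists M, P n M) ->
  forall m, exists M, forall n, (n < m)%N -> P n M.
Proof.
move=> mono ex; elim=> [|m [M hM]]; first by exists 0.
have [Mm hMm] := ex m; exists (Num.max M Mm) => n; rewrite ltnS leq_eqVlt => /orP[/eqP->|nm].
  by apply: mono hMm _; rewrite le_max lexx orbT.
by apply: mono (hM n nm) _; rewrite le_max lexx.
Qed.

Lemma Omega_box (R : realType) (G : grid R) x : Omega G x ->
  `|x.1| <= `|ga1 G| + `|gb1 G| + `|ga2 G| + `|gb2 G| /\
  `|x.2| <= `|ga1 G| + `|gb1 G| + `|ga2 G| + `|gb2 G|.
Proof.
move=> [/andP[a1 b1] /andP[a2 b2]].
have n1 := normr_ge0 (ga1 G); have n2 := normr_ge0 (gb1 G).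
have n3 := normr_ge0 (ga2 G); have n4 := normr_ge0 (gb2 G).
have q1 := ler_norm (ga1 G); have q2 := ler_norm (gb1 G).
have q3 := ler_norm (ga2 G); have q4 := ler_norm (gb2 G).
have r1 := ler_normr (ga1 G) (ga1 G); have r3 := ler_normr (ga2 G) (ga2 G).
have r2 := ler_normr (gb1 G) (gb1 G); have r4 := ler_normr (gb2 G) (gb2 G).
have s1 : - ga1 G <= `|ga1 G| by rewrite -normrN ler_norm.
have s2 : - gb1 G <= `|gb1 G| by rewrite -normrN ler_norm.
have s3 : - ga2 G <= `|ga2 G| by rewrite -normrN ler_norm.
have s4 : - gb2 G <= `|gb2 G| by rewrite -normrN ler_norm.
split; rewrite ler_norml; apply/andP; split; lra.
Qed.

Lemma pw_bnd (R : realType) (G : grid R) f : grid_ok G -> pw G f ->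
  exists M, forall x, Omega_int G x -> `|f x| <= M.
Proof.
move=> gok hf.
set K := `|ga1 G| + `|gb1 G| + `|ga2 G| + `|gb2 G|.
have mono : forall n M M', (forall x, Epc G n x -> `|f x| <= M) -> M <= M' ->
    (forall x, Epc G n x -> `|f x| <= M').
  by move=> n M M' h MM' x xE; apply: le_trans (h x xE) MM'.
have ex : forall n, exists M, forall x, Epc G n x -> `|f x| <= M.
  move=> n; have [i1 i2] := dec_ok n gok.
  have [g [pg e]] := hf _ _ (dec G n).2 i1 i2.
  have [M hM] := polyf_bnd pg K; exists M => x xE.
  have xO : Omega G x by apply: triint_Omega xE.
  rewrite e //; have [b1 b2] := Omega_box xO; exact: hM.
have [M hM] := @fin_bound R (fun n M => forall x, Epc G n x -> `|f x| <= M) mono ex (2 * gM2 G * gM1 G)%N.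
exists M => x [i [j [b [iM [jM xT]]]]].
have [e1 e2] := dec_enc b gok iM jM.
apply: (hM _ e2); by rewrite /Epc e1.
Qed.


Lemma Omega_setX (R : realType) (G : grid R) :
  Omega G = `]ga1 G, gb1 G[%classic `*` `]ga2 G, gb2 G[%classic.
Proof.
apply/seteqP; split => x /=; rewrite /Omega /= ?in_itv /=; by [].
Qed.

Lemma Omega_fin (R : realType) (G : grid R) : grid_ok G -> (lam2 (Omega G) < +oo)%E.
Proof.
move=> gok; rewrite Omega_setX /lam2 product_measure1E //.
have [h1 [h2 _]] := gok.
have e1 := lebesgue_measure_itv (R:=R) `]ga1 G, gb1 G[.
have e2 := lebesgue_measure_itv (R:=R) `]ga2 G, gb2 G[.
rewrite /= lte_fin h1 in e1; rewrite /= lte_fin h2 in e2.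
rewrite [X in (X * _)%E]e1 [X in (_ * X)%E]e2.
by rewrite -!EFinD -EFinM ltry.
Qed.

Lemma Omega_int_fin (R : realType) (G : grid R) : grid_ok G -> (lam2 (Omega_int G) < +oo)%E.
Proof.
move=> gok; apply: le_lt_trans (Omega_fin gok).
apply: le_measure; rewrite ?inE.
- exact: Omega_int_meas.
- rewrite Omega_setX; apply: measurableX; exact: measurable_itv.
- by move=> x; apply: Omega_int_Omega.
Qed.

Definition nice (R : realType) (G : grid R) (f : R * R -> R) :=
  measurable_fun (Omega_int G) f /\ exists M, forall x, Omega_int G x -> `|f x| <= M.

Lemma pw_nice (R : realType) (G : grid R) f : grid_ok G -> pw G f -> nice G f.
Proof. by move=> gok h; split; [exact: pw_meas|exact: pw_bnd]. Qed.

Lemma nice_add (R : realType) (G : grid R) f g : nice G f -> nice G g -> nice G (fun x => f x + g x).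
Proof.
move=> [mf [M1 h1]] [mg [M2 h2]]; split; first exact: measurable_funD.
exists (M1 + M2) => x xO; apply: le_trans (ler_normD _ _) _; apply: lerD; [exact: h1|exact: h2].
Qed.

Lemma nice_mul (R : realType) (G : grid R) f g : nice G f -> nice G g -> nice G (fun x => f x * g x).
Proof.
move=> [mf [M1 h1]] [mg [M2 h2]]; split; first exact: measurable_funM.
exists (M1 * M2) => x xO; rewrite normrM; apply: ler_pM => //; [exact: h1|exact: h2].
Qed.

Lemma nice_cst (R : realType) (G : grid R) (c : R) : nice G (fun _ => c).
Proof. by split; [exact: measurable_cst| exists `|c|]. Qed.

Lemma nice_scale (R : realType) (G : grid R) (a : R) f : nice G f -> nice G (fun x => a * f x).
Proof. by move=> h; apply: nice_mul => //; exact: nice_cst. Qed.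

Lemma nice_lin (R : realType) (G : grid R) a f b g : nice G f -> nice G g -> nice G (lin a f b g).
Proof. by move=> hf hg; apply: nice_add; apply: nice_scale. Qed.

Lemma nice_exp (R : realType) (G : grid R) f : nice G f -> nice G (fun x => expR (f x)).
Proof.
move=> [mf [M h]]; split.
  by apply: measurableT_comp => //; exact: measurable_expR.
exists (expR M) => x xO; rewrite gtr0_norm ?expR_gt0 // ler_expR.
by apply: le_trans (ler_norm _) (h x xO).
Qed.

Lemma nice_ext (R : realType) (G : grid R) f g : nice G f -> {in Omega_int G, f =1 g} -> nice G g.
Proof.
move=> [mf [M h]] e; split; first exact: eq_measurable_fun mf.
exists M => x xO; rewrite -e ?inE //; exact: h.
Qed.

Lemma nice_int (R : realType) (G : grid R) f : grid_ok G -> nice G f ->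
  (@lam2 R).-integrable (Omega_int G) (EFin \o f).
Proof.
move=> gok [mf [M h]]; apply: measurable_bounded_integrable => //.
- exact: Omega_int_meas.
- exact: Omega_int_fin.
- exists M; split; first by rewrite num_real.
  move=> y My x xO; apply: le_trans (h x xO) _; exact: ltW.
Qed.

Lemma ip_sym (R : realType) (G : grid R) f g : ip G f g = ip G g f.
Proof. by rewrite /ip; congr Rintegral; apply: funext => x; rewrite mulrC. Qed.

Lemma ip_ge0 (R : realType) (G : grid R) f : 0 <= ip G f f.
Proof. by rewrite /ip; apply: Rintegral_ge0 => x _; rewrite -expr2 sqr_ge0. Qed.

Lemma ip_extl (R : realType) (G : grid R) f f' g : {in Omega_int G, f =1 f'} -> ip G f g = ip G f' g.
Proof. by move=> e; rewrite /ip; apply: eq_Rintegral => x xO; rewrite e. Qed.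

Lemma ip_linl (R : realType) (G : grid R) a f b g h : grid_ok G -> nice G f -> nice G g -> nice G h ->
  ip G (lin a f b g) h = a * ip G f h + b * ip G g h.
Proof.
move=> gok nf ng nh; rewrite /ip /lin.
have -> : (fun x => (a * f x + b * g x) * h x) = (fun x => a * (f x * h x) + b * (g x * h x)).
  by apply: funext => x; ring.
rewrite RintegralD; first last.
- by apply: nice_int => //; apply: nice_scale; apply: nice_mul.
- by apply: nice_int => //; apply: nice_scale; apply: nice_mul.
- exact: Omega_int_meas.
rewrite !RintegralZl //; try exact: Omega_int_meas.
- by apply: nice_int => //; apply: nice_mul.
- by apply: nice_int => //; apply: nice_mul.
Qed.

Definition niceV (R : realType) (G : grid R) (u : vfun R) := nice G u.1 /\ nice G u.2.

Lemma ipv_sym (R : realType) (G : grid R) u v : ipv G u v = ipv G v u.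
Proof. by rewrite /ipv ip_sym [ip G u.2 _]ip_sym. Qed.

Lemma ipv_ge0 (R : realType) (G : grid R) u : 0 <= ipv G u u.
Proof. by rewrite /ipv addr_ge0 // ip_ge0. Qed.

Lemma ipv_linl (R : realType) (G : grid R) a u b v w : grid_ok G -> niceV G u -> niceV G v -> niceV G w ->
  ipv G (vlin a u b v) w = a * ipv G u w + b * ipv G v w.
Proof.
move=> gok [u1 u2] [v1 v2] [w1 w2]; rewrite /ipv /vlin /= !ip_linl //; ring.
Qed.

Lemma ipv_linr (R : realType) (G : grid R) a u b v w : grid_ok G -> niceV G u -> niceV G v -> niceV G w ->
  ipv G w (vlin a u b v) = a * ipv G w u + b * ipv G w v.
Proof.
by move=> gok nu nv nw; rewrite ipv_sym ipv_linl // ![ipv G _ w]ipv_sym.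
Qed.

Lemma niceV_lin (R : realType) (G : grid R) a u b v : niceV G u -> niceV G v -> niceV G (vlin a u b v).
Proof. by move=> [u1 u2] [v1 v2]; split; apply: nice_lin. Qed.

Lemma ipv_extl (R : realType) (G : grid R) u u' v :
  {in Omega_int G, u.1 =1 u'.1} -> {in Omega_int G, u.2 =1 u'.2} -> ipv G u v = ipv G u' v.
Proof. by move=> e1 e2; rewrite /ipv (ip_extl _ e1) (ip_extl _ e2). Qed.


Lemma int_mono_nm d (T : measurableType d) (R : realType) (mu : {measure set T -> \bar R})
  (D : set T) (f g : T -> \bar R) :
  (forall x, D x -> (0 <= f x)%E) -> (forall x, D x -> (f x <= g x)%E) ->
  (\int[mu]_(x in D) f x <= \int[mu]_(x in D) g x)%E.
Proof.
move=> f0 fg; have g0 : forall x, D x -> (0 <= g x)%E.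
  by move=> x xD; apply: le_trans (f0 x xD) (fg x xD).
rewrite (ge0_integralE _ f0) (ge0_integralE _ g0) /=.
apply: ereal_sup_le => _ [h hf <-]; exists h => //= x.
apply: le_trans (hf x) _; rewrite /patch; case: ifP => // xD.
by apply: fg; rewrite inE in xD.
Qed.

Lemma Rint_pos (R : realType) (D S : set (R * R)) (f : R * R -> R) (eps M : R) :
  measurable D -> measurable S -> S `<=` D -> (0 < (@lam2 R) S)%E -> ((@lam2 R) D < +oo)%E ->
  0 < eps -> 0 <= M -> (forall x, S x -> eps <= f x) -> (forall x, D x -> 0 <= f x <= M) ->
  0 < Rintegral (@lam2 R) D f.
Proof.
move=> mD mS SD S0 Dfin e0 M0 fS fD.
have lo : ((eps%:E * (@lam2 R) S) <= \int[(@lam2 R)]_(x in D) (f x)%:E)%E.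
  have -> : (eps%:E * (@lam2 R) S = \int[(@lam2 R)]_(x in D) (eps%:E * (\1_S x)%:E))%E.
    have i0 : forall x, D x -> (0 <= (fun x => (\1_S x : R)%:E) x)%E by move=> x xD /=; rewrite lee_fin.
    have im : measurable_fun D (fun x => (\1_S x : R)%:E).
      by apply/measurable_EFinP; exact: measurable_indic.
    have h := @ge0_integralZl_EFin _ _ _ (@lam2 R) D mD (fun x => (\1_S x : R)%:E) i0 im eps (ltW e0).
    simpl in h; rewrite h.
    by rewrite integral_indic // setIidl.
  apply: int_mono_nm.
    by move=> x _; rewrite mule_ge0 // lee_fin ?ltW.
  move=> x xD; rewrite -EFinM lee_fin /indic; case: (boolP (x \in S)) => xS.
    by rewrite mulr1; apply: fS; rewrite inE in xS.
  by rewrite mulr0; have /andP[] := fD x xD.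
have up : (\int[(@lam2 R)]_(x in D) (f x)%:E <= M%:E * (@lam2 R) D)%E.
  rewrite -integral_cst //; apply: int_mono_nm.
    by move=> x xD; have /andP[] := fD x xD; rewrite lee_fin.
  by move=> x xD; have /andP[] := fD x xD; rewrite lee_fin.
have pos : (0 < eps%:E * (@lam2 R) S)%E by rewrite mule_gt0 // lte_fin.
have fin : (M%:E * (@lam2 R) D < +oo)%E.
  apply: lte_mul_pinfty => //; by rewrite ?lee_fin.
rewrite /Rintegral; move: lo up.
case: (\int[(@lam2 R)]_(x in D) (f x)%:E)%E => [r| |] /= lo up.
- by rewrite -lte_fin; apply: lt_le_trans pos lo.
- by move: (le_lt_trans up fin); rewrite ltxx.
- by move: (lt_le_trans pos lo); rewrite ltNge leNye.
Qed.


Lemma cont_lb (R : realType) (A : set (R * R)) (f : R * R -> R) (x0 : R * R) :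
  {within A, continuous f} -> A x0 -> 0 < f x0 ->
  exists2 d, 0 < d & forall y, A y -> `|x0.1 - y.1| < d -> `|x0.2 - y.2| < d -> f x0 / 2 < f y.
Proof.
move=> fc Ax f0.
have h : f @ within A (nbhs x0) --> f x0.
  rewrite (nbhs_subspace_in Ax); move: fc; rewrite continuous_subspace_in => fc.
  by apply: fc; rewrite inE.
move/cvgrPdist_lt : h => /(_ (f x0 / 2)) h.
have : 0 < f x0 / 2 by rewrite divr_gt0.
move/h; rewrite /within /= => /nbhs_ballP [e e0 he].
exists e => // y Ay d1 d2.
have : `|f x0 - f y| < f x0 / 2.
  apply: he => //; split => /=; by rewrite ?ball_normE /ball /=.
rewrite ltr_norml => /andP[a b]; lra.
Qed.

Lemma Omegac_setX (R : realType) (G : grid R) :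
  Omegac G = `[ga1 G, gb1 G]%classic `*` `[ga2 G, gb2 G]%classic.
Proof. by apply/seteqP; split => x /=; rewrite /Omegac /= ?in_itv /=. Qed.

Lemma cont_bnd (R : realType) (G : grid R) (f : R * R -> R) :
  {within Omegac G, continuous f} -> exists M, 0 <= M /\ forall x, Omegac G x -> `|f x| <= M.
Proof.
move=> fc.
have cO : compact (Omegac G).
  by rewrite Omegac_setX; apply: compact_setX; exact: segment_compact.
have := compact_bounded (continuous_compact fc cO).
move=> [M [_ hM]]; exists (`|M| + 1); split; first by rewrite addr_ge0.
move=> x xO; apply: (hM (`|M| + 1)); last by exists x.
by apply: le_lt_trans (ler_norm M) _; rewrite ltrDl.
Qed.

Definition x0c (R : realType) (G : grid R) : R * R := (ga1 G + hx G * 2 / 3, ga2 G + hy G / 3).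

Definition Sq (R : realType) (G : grid R) (d : R) : set (R * R) :=
  [set y | `|(x0c G).1 - y.1| < d /\ `|(x0c G).2 - y.2| < d].

Lemma Sq_triint (R : realType) (G : grid R) d y : grid_ok G -> d <= hx G / 6 -> d <= hy G / 6 ->
  Sq G d y -> triint G 0 0 false y.
Proof.
move=> gok dx dy [h1 h2]; have hx0 := hx_gt0 gok; have hy0 := hy_gt0 gok.
move: h1 h2; rewrite /x0c /= !ltr_norml => /andP[a1 a2] /andP[b1 b2].
rewrite /triint /= !mul0r !addr0.
split; [|split].
- by rewrite divr_gt0 //; lra.
- apply: (@lt_trans _ _ (1/2)).
    by rewrite ltr_pdivrMr //; lra.
  by rewrite ltr_pdivlMr //; lra.
- by rewrite ltr_pdivrMr //; lra.
Qed.

Lemma Sq_Omega_int (R : realType) (G : grid R) d : grid_ok G -> d <= hx G / 6 -> d <= hy G / 6 ->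
  Sq G d `<=` Omega_int G.
Proof.
move=> gok dx dy y yS; have [_ [_ [M1 M2]]] := gok.
by exists 0%N, 0%N, false; do 2 split => //; exact: Sq_triint yS.
Qed.

Lemma Sq_setX (R : realType) (G : grid R) d : Sq G d =
  `](x0c G).1 - d, (x0c G).1 + d[%classic `*` `](x0c G).2 - d, (x0c G).2 + d[%classic.
Proof.
apply/seteqP; split => y /=; rewrite /Sq /= ?in_itv /= !ltr_norml.
  by move=> [/andP[a b] /andP[c e]]; split; apply/andP; split; lra.
by move=> [/andP[a b] /andP[c e]]; split; apply/andP; split; lra.
Qed.

Lemma Sq_meas (R : realType) (G : grid R) d : measurable (Sq G d).
Proof. by rewrite Sq_setX; apply: measurableX; exact: measurable_itv. Qed.

Lemma Sq_pos (R : realType) (G : grid R) d : 0 < d -> (0 < (@lam2 R) (Sq G d))%E.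
Proof.
move=> d0; rewrite Sq_setX /lam2 product_measure1E //; try exact: measurable_itv.
have e1 := lebesgue_measure_itv (R:=R) `](x0c G).1 - d, (x0c G).1 + d[.
have e2 := lebesgue_measure_itv (R:=R) `](x0c G).2 - d, (x0c G).2 + d[.
have l1 : (x0c G).1 - d < (x0c G).1 + d by lra.
have l2 : (x0c G).2 - d < (x0c G).2 + d by lra.
rewrite /= lte_fin l1 in e1; rewrite /= lte_fin l2 in e2.
rewrite [X in (_ < X * _)%E]e1 [X in (_ < _ * X)%E]e2.
by rewrite -!EFinD -EFinM lte_fin mulr_gt0 //; lra.
Qed.


Lemma Omega_Omegac (R : realType) (G : grid R) x : Omega G x -> Omegac G x.
Proof. by move=> [/andP[a b] /andP[c d]]; split; apply/andP; split; apply: ltW. Qed.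

Lemma x0c_Omega_int (R : realType) (G : grid R) : grid_ok G -> Omega_int G (x0c G).
Proof.
move=> gok; have hx0 := hx_gt0 gok; have hy0 := hy_gt0 gok.
apply: (@Sq_Omega_int R G (Num.min (hx G / 6) (hy G / 6))) => //.
- by rewrite ge_min lexx.
- by rewrite ge_min lexx orbT.
- by rewrite /Sq /= !subrr normr0 lt_min; split; apply/andP; split; rewrite divr_gt0.
Qed.

Lemma ip_pos_cont (R : realType) (G : grid R) (f : R * R -> R) : grid_ok G -> {within Omegac G, continuous f} ->
  (forall x, Omega G x -> 0 < f x) -> 0 < ip G f onef.
Proof.
move=> gok fc fp; have hx0 := hx_gt0 gok; have hy0 := hy_gt0 gok.
have x0O : Omega G (x0c G) by apply: Omega_int_Omega => //; exact: x0c_Omega_int.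
have f0 := fp _ x0O.
have [e e0 he] := cont_lb fc (Omega_Omegac x0O) f0.
have [M [M0 hM]] := cont_bnd fc.
set d := Num.min e (Num.min (hx G / 6) (hy G / 6)).
have d1 : d <= hx G / 6 by rewrite /d !ge_min lexx orbT.
have d2 : d <= hy G / 6 by rewrite /d !ge_min lexx !orbT.
have d3 : d <= e by rewrite /d !ge_min lexx.
have d0 : 0 < d by rewrite /d !lt_min e0 /=; apply/andP; split; apply: divr_gt0.
rewrite /ip; apply: (@Rint_pos R _ (Sq G d) _ (f (x0c G) / 2) M).
- exact: Omega_int_meas.
- exact: Sq_meas.
- exact: Sq_Omega_int.
- exact: Sq_pos.
- exact: Omega_int_fin.
- by rewrite divr_gt0.
- exact: M0.
- move=> y [y1 y2]; rewrite /onef mulr1; apply: ltW; apply: he.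
    by apply: Omega_Omegac; apply: Omega_int_Omega => //; apply: (Sq_Omega_int gok d1 d2).
    by apply: lt_le_trans y1 d3.
  by apply: lt_le_trans y2 d3.
- move=> y yO; rewrite /onef mulr1; have yO' := Omega_int_Omega gok yO.
  rewrite (ltW (fp _ yO')) /=; apply: le_trans (ler_norm _) _; apply: hM.
  exact: Omega_Omegac.
Qed.

Lemma ip_pos_nice (R : realType) (G : grid R) (f : R * R -> R) (eps : R) : grid_ok G -> nice G f -> 0 < eps ->
  (forall x, Omega_int G x -> eps <= f x) -> 0 < ip G f onef.
Proof.
move=> gok [_ [M hM]] e0 fe; have hx0 := hx_gt0 gok; have hy0 := hy_gt0 gok.
set d := Num.min (hx G / 6) (hy G / 6).
have d1 : d <= hx G / 6 by rewrite /d !ge_min lexx.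
have d2 : d <= hy G / 6 by rewrite /d !ge_min lexx !orbT.
have d0 : 0 < d by rewrite /d !lt_min; apply/andP; split; apply: divr_gt0.
rewrite /ip; apply: (@Rint_pos R _ (Sq G d) _ eps (Num.max M 0)).
- exact: Omega_int_meas.
- exact: Sq_meas.
- exact: Sq_Omega_int.
- exact: Sq_pos.
- exact: Omega_int_fin.
- exact: e0.
- by rewrite le_max lexx orbT.
- move=> y yS; rewrite /onef mulr1; apply: fe; exact: (Sq_Omega_int gok d1 d2).
- move=> y yO; rewrite /onef mulr1; have := fe y yO => ey.
  rewrite (le_trans (ltW e0) ey) /= le_max; apply/orP; left.
  by apply: le_trans (ler_norm _) (hM y yO).
Qed.

Lemma ip_scalel (R : realType) (G : grid R) (a : R) f h : grid_ok G -> nice G f -> nice G h ->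
  ip G (fun x => a * f x) h = a * ip G f h.
Proof.
move=> gok nf nh; rewrite /ip.
have -> : (fun x => a * f x * h x) = (fun x => a * (f x * h x)) by apply: funext => x; ring.
rewrite RintegralZl //; first exact: Omega_int_meas.
by apply: nice_int => //; apply: nice_mul.
Qed.


Unset Implicit Arguments. Set Strict Implicit. Set Printing Implicit Defensive.

Ltac side := first [assumption | (repeat apply: niceV_lin); assumption].
Ltac expand := repeat (first [rewrite ipv_linl; try side | rewrite ipv_linr; try side]).
Ltac expand_in H := repeat (first [rewrite ipv_linl in H; try side | rewrite ipv_linr in H; try side]).

Theorem mainTheorem1 (R : realType) (G : grid R) (l1 l2 l3 N : nat)
  (z : 'I_N -> int) (W : 'M[R]_N)
  (Re Co Pe lambda lambda1 k mu0 muinf B dt : R) (n : nat)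
  (sig c : nat -> 'I_N -> R * R -> R) (V : nat -> R * R -> R)
  (u : nat -> vfun R) (p : nat -> R * R -> R) (r : nat -> R)
  (mu : nat -> R * R -> R)
  (cbar : 'I_N -> R * R -> R) (Vb : R * R -> R) (ut : vfun R)
  (psi : R * R -> R) (xi : R) :
  (* setting *)
  grid_ok G -> 0 < meshsize G < 1 -> inf_sup G l1 l2 ->
  posdef W -> (forall i j, 0 <= W i j) ->
  0 < Re -> 0 < Co -> 0 < Pe -> 0 < lambda -> 0 < lambda1 -> 0 < k ->
  0 < muinf -> muinf < mu0 -> 0 < B -> 0 < dt ->
  (1 <= n)%N ->
  (* data at steps n and n-1 *)
  (forall i, Qh G l3 (sig n i) /\ Qh G l3 (sig n.-1 i)) ->
  (forall i, {within Omegac G, continuous (c n i)}) ->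
  Mh G l2 (p n) ->
  proj_vel G l1 l2 (u n) -> proj_vel G l1 l2 (u n.-1) ->
  (forall q, Mh G l2 q -> ipv G (u n) (grad q) = 0 /\ ipv G (u n.-1) (grad q) = 0) ->
  let ustar := vlin 2 (u n) (-1) (u n.-1) in
  let sstar := fun i => lin 2 (sig n i) (-1) (sig n.-1 i) in
  let cstar := fun i => lin 2 (c n i) (-1) (c n.-1 i) in
  let Vstar := lin 2 (V n) (-1) (V n.-1) in
  let mustar := lin 2 (mu n) (-1) (mu n.-1) in
  (* (a) *)
  (forall i, Qh G l3 (sig n.+1 i) /\
     forall eta, Qh G l3 eta ->
       eq_a G Pe dt z W (sig n.+1) (sig n) (sig n.-1) sstar cstar Vstar ustar i eta) ->
  (* (b) *)
  (forall i, cbar i = fun x => expR (sig n.+1 i x)) ->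
  (forall i, c n.+1 i = fun x => ip G (c n i) onef / ip G (cbar i) onef * cbar i x) ->
  (* (c) *)
  Sh G l3 Vb ->
  (forall phi, Qh G l3 phi ->
     lambda * ipg G Vb phi = \sum_(i < N) ip G (fun x => (z i)%:~R * c n.+1 i x) phi) ->
  (* (e) *)
  Xh G l1 ut ->
  (forall v, Xh G l1 v -> eq_e G Re Co dt xi z ut (u n) (u n.-1) ustar mustar (p n) Vb (c n.+1) v) ->
  (* (f) *)
  xi = r n.+1 / Num.sqrt (Espnp G lambda Co W (c n.+1) Vb + B) ->
  V n.+1 = (fun x => xi * Vb x) ->
  eq_f G Co Pe dt B xi (r n.+1) (r n) (r n.-1) z W (c n.+1) Vb lambda ut ustar ->
  (* (g) *)
  Mh G l2 psi ->
  (forall q, Mh G l2 q -> ipg G psi q = 3 / (2 * dt) * ipv G ut (grad q)) ->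
  u n.+1 = vlin 1 ut (- (2 * dt / 3)) (grad psi) ->
  p n.+1 = (fun x => psi x + p n x) ->
  (* (h) *)
  mu n.+1 = carreau mu0 muinf lambda1 k (u n.+1) ->
  (* assumption bar E + B > 0 *)
  0 < Espnp G lambda Co W (c n.+1) Vb + B ->
  (* (1) positivity *)
  ((forall i x, Omega G x -> 0 < c n i x) -> forall i x, Omega G x -> 0 < c n.+1 i x)
  (* (2) mass conservation *)
  /\ (forall i, ip G (c n.+1 i) onef = ip G (c n i) onef)
  (* (3) energy dissipation *)
  /\ (Eh G dt (u n.+1) (u n) (p n.+1) (r n.+1) (r n)
        - Eh G dt (u n) (u n.-1) (p n) (r n) (r n.-1)) / dt
     <= - Re^-1 * visc G mustar ut ut
        - xi ^+ 2 * (Co / Pe) * \sum_(i < N) dissip G z W (c n.+1) (Vb) i.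

Proof.
move=> gok _ _ _ _ Re0 Co0 Pe0 _ _ _ _ _ B0 dt0 n1 hsig hcont hpn huv1 huv2 horth.
move=> ustar sstar cstar Vstar mustar hA hcb hc hVb hVeq hut heqe hxi hVn1 heqf hpsi hg hun1 hpn1 hmu hEB.
have hcbn : forall i, nice G (cbar i).
  move=> i; rewrite (hcb i); apply: nice_exp; apply: pw_nice => //.
  have [hq _] := hA i; exact: FE_pw0 hq.
have hcbp : forall i, 0 < ip G (cbar i) onef.
  move=> i; have [hq _] := hA i; have [_ [M hM]] := pw_nice gok (FE_pw0 gok hq).
  apply: (@ip_pos_nice R G _ (expR (- M))) => //; first exact: expR_gt0.
  move=> x xO; rewrite (hcb i) ler_expR; have := hM x xO; rewrite ler_norml => /andP[] //.
have mass : forall i, ip G (c n.+1 i) onef = ip G (c n i) onef.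
  move=> i; rewrite (hc i) ip_scalel //; last exact: nice_cst.
  by rewrite divfK // gt_eqF.
split.
  move=> cpos i x xO; rewrite (hc i); apply: mulr_gt0.
    apply: divr_gt0; last exact: hcbp.
    by apply: ip_pos_cont => //; try exact: hcont; move=> y yO; exact: cpos.
  by rewrite (hcb i) expR_gt0.
split; first exact: mass.
have FEn : forall l f, FEfun G l f -> nice G f /\ nice G (dx f) /\ nice G (dy f).
  move=> l f hf; split; [|split]; apply: pw_nice => //;
    [exact: FE_pw0 hf|exact: FE_pwx hf|exact: FE_pwy hf].
have nut : niceV G ut.
  have [h1 [h2 _]] := hut; split; [exact: (FEn _ _ h1).1|exact: (FEn _ _ h2).1].
have nPV : forall w, proj_vel G l1 l2 w -> niceV G w.
  move=> w [w0 [phi [[h1 [h2 _]] [[hphi _] ->]]]]; split; apply: nice_lin.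
  - exact: (FEn _ _ h1).1.
  - exact: (FEn _ _ hphi).2.1.
  - exact: (FEn _ _ h2).1.
  - exact: (FEn _ _ hphi).2.2.
have nb := nPV _ huv1; have nc := nPV _ huv2.
have [hpsiFE _] := hpsi; have [hpnFE _] := hpn.
have ng : niceV G (grad psi) by split; [exact: (FEn _ _ hpsiFE).2.1|exact: (FEn _ _ hpsiFE).2.2].
have nq : niceV G (grad (p n)) by split; [exact: (FEn _ _ hpnFE).2.1|exact: (FEn _ _ hpnFE).2.2].
have egp : ipg G (p n.+1) (p n.+1) =
    ipv G (vlin 1 (grad psi) 1 (grad (p n))) (vlin 1 (grad psi) 1 (grad (p n))).
  have e1 : {in Omega_int G, (grad (p n.+1)).1 =1 (vlin 1 (grad psi) 1 (grad (p n))).1}.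
    move=> x; rewrite inE => xO /=; rewrite /lin !mul1r /dx !derive1E hpn1.
    have [d1 _] := FE_derivable gok hpsiFE xO; have [d2 _] := FE_derivable gok hpnFE xO.
    exact: deriveD d1 d2.
  have e2 : {in Omega_int G, (grad (p n.+1)).2 =1 (vlin 1 (grad psi) 1 (grad (p n))).2}.
    move=> x; rewrite inE => xO /=; rewrite /lin !mul1r /dy !derive1E hpn1.
    have [_ d1] := FE_derivable gok hpsiFE xO; have [_ d2] := FE_derivable gok hpnFE xO.
    exact: deriveD d1 d2.
  by rewrite /ipg (ipv_extl _ e1 e2) (ipv_sym G (vlin _ _ _ _)) (ipv_extl _ e1 e2).
have E := heqe ut hut; rewrite /eq_e in E.
have F := heqf; rewrite /eq_f in F; cbv zeta in F.
have G1 := hg psi hpsi; have G2 := hg (p n) hpn; rewrite /ipg in G1 G2.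
have [H1 H2] := horth psi hpsi.
have KK : ipv G (fun x => \sum_(i < N) (z i)%:~R * c n.+1 i x * dx Vb x,
                 fun x => \sum_(i < N) (z i)%:~R * c n.+1 i x * dy Vb x) ut =
          ipv G (fun x => \sum_(i < N) (z i)%:~R * c n.+1 i x * ut.1 x,
                 fun x => \sum_(i < N) (z i)%:~R * c n.+1 i x * ut.2 x) (grad Vb).
  rewrite /ipv /ip /=; congr (_ + _); congr Rintegral; apply: funext => x;
    rewrite !big_distrl /=; apply: eq_bigr => i _; ring.
rewrite KK in E.
rewrite /Eh egp hun1 -/(ipg G (p n) (p n)).
have hN := ipv_ge0 G (vlin 1 (vlin 1 ut (- (2 * dt / 3)) (grad psi)) 1 (vlin (-2) (u n) 1 (u n.-1))).
have hgg := ipv_ge0 G (grad psi).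
expand_in E.
expand_in hN.
expand.
rewrite /ipg.
rewrite ?[ipv G (grad psi) ut]ipv_sym ?[ipv G (grad psi) (u n)]ipv_sym ?[ipv G (grad psi) (u n.-1)]ipv_sym
  ?[ipv G ut (u n)]ipv_sym ?[ipv G ut (u n.-1)]ipv_sym ?[ipv G (grad (p n)) ut]ipv_sym
  ?[ipv G (grad (p n)) (grad psi)]ipv_sym ?[ipv G (u n.-1) (u n)]ipv_sym.
rewrite ?[ipv G (grad psi) ut]ipv_sym ?[ipv G (grad psi) (u n)]ipv_sym ?[ipv G (grad psi) (u n.-1)]ipv_sym
  ?[ipv G ut (u n)]ipv_sym ?[ipv G ut (u n.-1)]ipv_sym ?[ipv G (grad (p n)) ut]ipv_sym
  ?[ipv G (grad (p n)) (grad psi)]ipv_sym ?[ipv G (u n.-1) (u n)]ipv_sym in hN E.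
rewrite /ipg in G2.
set uu := ipv G ut ut in hN E G1 G2 *.
set ug := ipv G ut (grad psi) in hN E G1 G2 *.
set gg := ipv G (grad psi) (grad psi) in hN E G1 G2 hgg *.
set ub := ipv G (u n) ut in hN E G1 G2 *.
set uc := ipv G (u n.-1) ut in hN E G1 G2 *.
set bg := ipv G (u n) (grad psi) in hN E G1 G2 H1 *.
set cg := ipv G (u n.-1) (grad psi) in hN E G1 G2 H2 *.
set bb := ipv G (u n) (u n) in hN E G1 G2 *.
set bc := ipv G (u n) (u n.-1) in hN E G1 G2 *.
set cc := ipv G (u n.-1) (u n.-1) in hN E G1 G2 *.
set uq := ipv G ut (grad (p n)) in hN E G1 G2 *.
set gq := ipv G (grad psi) (grad (p n)) in hN E G1 G2 *.
set qq := ipv G (grad (p n)) (grad (p n)) in hN E G1 G2 *.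
set Vis := visc G mustar ut ut in E *.
set Cv := Defs.conv G ustar ut in E F *.
set K := ipv G _ (grad Vb) in E F.
set D := \sum_(i < N) dissip G z W (c n.+1) Vb i in F *.
set S := Num.sqrt (Espnp G lambda Co W (c n.+1) Vb + B) in F hxi.
set r1 := r n.+1 in F hxi *.
set rn := r n in F *.
set rm := r n.-1 in F *.
have dtn : dt != 0 by rewrite gt_eqF.
have Sp : 0 < S by rewrite /S sqrtr_gt0.
have Sn : S != 0 by rewrite gt_eqF.
have Pen : Pe != 0 by rewrite gt_eqF.
have ug_e : ug = 2 * dt / 3 * gg.
  rewrite G1; field; done.
have uq_e : uq = 2 * dt / 3 * gq.
  rewrite G2; field; done.
have E' : 3 * uu - 4 * ub + uc = 2 * dt * (- Co * xi * K - xi * Cv - Re^-1 * Vis - uq).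
  have e0 : 3 / (2 * dt) * uu + 1 / (2 * dt) * (-4 * ub + 1 * uc) =
      - Co * xi * K - xi * Cv - Re^-1 * Vis - uq by lra.
  rewrite -e0; field; done.
have F' : r1 * (3 * r1 - 4 * rn + rm) = dt * xi * (- (Co / Pe) * xi * D + Co * K + Cv).
  have -> : 3 * r1 - 4 * rn + rm = 2 * dt * ((3 * r1 - 4 * rn + rm) / (2 * dt)) by field.
  rewrite F hxi; field; by rewrite Sn Pen.
have hr : 0 <= (r1 - 2 * rn + rm) ^+ 2 by exact: sqr_ge0.
have hgg' : 0 <= dt ^+ 2 * gg by rewrite mulr_ge0 // sqr_ge0.
rewrite ug_e uq_e H1 H2 in hN E' *.
rewrite ler_pdivrMr //.
lra.
Qed.
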